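(* Let $f:\mathbb Z^+\to[0,\infty)$ be nondecreasing with $f(0)=0$ and $f(z)>0$ for $z>0$, and let $\mathcal H(\varrho)=\mathbf E^\varrho f(\omega)$ for $\varrho\in(0,\infty)$. If $f$ is convex (respectively concave), then $\mathcal H$ is convex (respectively concave) on $(0,\infty)$. Moreover, in this case $\mathcal H''(\varrho)>0$ (respectively $\mathcal H''(\varrho)<0$) for all $\varrho>0$ if and only if $f$ is not a linear function.
   Context: Set $f(0)!=1$, $f(z)!=\prod_{y=1}^zf(y)$. Let $\bar\theta=\lim_{z\to\infty}\log f(z)$ (assumed $>-\infty$, automatically true here). For $\theta<\bar\theta$, $Z(\theta)=\sum_{z\ge0}e^{\theta z}/f(z)!<\infty$ and $\mu^\theta(z)=e^{\theta z}/(Z(\theta)f(z)!)$, $z\in\mathbb Z^+$. The mean $\varrho(\theta)=\sum_zz\mu^\theta(z)$ is a strictly increasing bijection onto $(0,\infty)$; $\mathbf E^\varrho$ denotes expectation of $\omega\sim\mu^{\theta(\varrho)}$. ($\mathcal H$ is the hydrodynamic flux of the totally asymmetric zero range process with jump rate $f$.) *)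

(* Defs.v *)
From Stdlib Require Import Reals ClassicalEpsilon.
From Coquelicot Require Import Coquelicot.
Open Scope R_scope.

Fixpoint ffact (f : nat -> R) (z : nat) : R :=
  match z with
  | O => 1
  | S n => ffact f n * f (S n)
  end.

Definition thetabar (f : nat -> R) : Rbar := Lim_seq (fun z => ln (f z)).

Definition Zpart (f : nat -> R) (th : R) : R :=
  Series (fun z => exp (th * INR z) / ffact f z).

Definition mu (f : nat -> R) (th : R) (z : nat) : R :=
  exp (th * INR z) / (Zpart f th * ffact f z).

Definition rho_of (f : nat -> R) (th : R) : R :=
  Series (fun z => INR z * mu f th z).

Definition theta_of (f : nat -> R) (r : R) : R :=
  epsilon (inhabits 0) (fun th => Rbar_lt th (thetabar f) /\ rho_of f th = r).

Definition Hflux (f : nat -> R) (r : R) : R :=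
  Series (fun z => f z * mu f (theta_of f r) z).

Definition fconvex (f : nat -> R) : Prop :=
  forall z : nat, f (S z) - f z <= f (S (S z)) - f (S z).
Definition fconcave (f : nat -> R) : Prop :=
  forall z : nat, f (S (S z)) - f (S z) <= f (S z) - f z.
Definition flinear (f : nat -> R) : Prop :=
  exists c : R, forall z : nat, f z = c * INR z.

Definition convex_pos (h : R -> R) : Prop :=
  forall x y t, 0 < x -> 0 < y -> 0 <= t <= 1 ->
    h (t * x + (1 - t) * y) <= t * h x + (1 - t) * h y.
Definition concave_pos (h : R -> R) : Prop :=
  forall x y t, 0 < x -> 0 < y -> 0 <= t <= 1 ->
    t * h x + (1 - t) * h y <= h (t * x + (1 - t) * y).

(* Main.v *)
Require Import Defs.
From Stdlib Require Import Reals Lra Lia Psatz Classical ClassicalEpsilon Ranalysis5.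
From Coquelicot Require Import Coquelicot.
Open Scope R_scope.

Lemma is_derive_eq (g : R -> R) (x d dd : R) : is_derive g x d -> d = dd -> is_derive g x dd.
Proof. intros H ->; exact H. Qed.

Lemma exp_INR_pow th z : exp (th * INR z) = exp th ^ z.
Proof.
  induction z as [|z IH]. simpl. rewrite Rmult_0_r. apply exp_0.
  rewrite S_INR, Rmult_plus_distr_l, Rmult_1_r, exp_plus, IH. simpl. ring.
Qed.

Lemma sum_f_R0_ge_term (a : nat -> R) k : (forall n, 0 <= a n) -> a k <= sum_f_R0 a k.
Proof.
  intros Ha. destruct k. simpl; lra.
  rewrite tech5. assert (0 <= sum_f_R0 a k). apply cond_pos_sum; auto. lra.
Qed.

Lemma Series_zero : Series (fun _ => 0) = 0.
Proof.
  rewrite (Series_ext (fun _ => 0) (fun n => 0 * 0)) by (intros; ring).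
  rewrite Series_scal_l. ring.
Qed.

Lemma Series_ge_term (a : nat -> R) k : (forall n, 0 <= a n) -> ex_series a -> a k <= Series a.
Proof.
  intros Ha He. rewrite (Series_incr_n a (S k)) by (auto; lia). simpl.
  assert (0 <= Series (fun j => a (S (k + j)))).
  { rewrite <- Series_zero. apply Series_le. intros; split; [lra|apply Ha].
    apply (ex_series_incr_n a (S k)) in He. exact He. }
  pose proof (sum_f_R0_ge_term a k Ha). lra.
Qed.

Lemma exs_le (a b : nat -> R) : (forall n, Rabs (a n) <= b n) -> ex_series b -> ex_series a.
Proof. intros H Hb. apply (@ex_series_le R_AbsRing R_CompleteNormedModule a b); auto. Qed.

Lemma iss_ext (a b : nat -> R) (l : R) : (forall n, a n = b n) -> is_series a l -> is_series b l.
Proof. intros H Ha. exact (is_series_ext a b l H Ha). Qed.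

Lemma iss_scal0 (a : nat -> R) (c : R) : is_series a 0 -> is_series (fun n => c * a n) 0.
Proof.
  intros H. pose proof (is_series_scal_l c a 0 H) as H1.
  change (is_series (fun n => c * a n) (c * 0)) in H1. rewrite Rmult_0_r in H1. exact H1.
Qed.

Lemma exp_le a b : a <= b -> exp a <= exp b.
Proof. intros [H|H]. left; apply exp_increasing; auto. subst; lra. Qed.

Lemma pow_le_one (q : R) n : 0 <= q <= 1 -> q ^ n <= 1.
Proof. intros Hq. induction n. simpl; lra. simpl. assert (0 <= q ^ n) by (apply pow_le; lra). nra. Qed.

Lemma pow_decr (q : R) z M : 0 <= q <= 1 -> (z <= M)%nat -> q ^ M <= q ^ z.
Proof.
  intros Hq Hz. replace M with (z + (M - z))%nat by lia. rewrite pow_add.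
  pose proof (pow_le_one q (M - z) Hq). assert (0 <= q ^ z) by (apply pow_le; lra).
  assert (0 <= q ^ (M - z)) by (apply pow_le; lra). nra.
Qed.


Definition convseq (r : nat -> R) := forall z, r (S z) - r z <= r (S (S z)) - r (S z).

Lemma convseq_mono r : convseq r -> forall i j, (i <= j)%nat -> r (S i) - r i <= r (S j) - r j.
Proof.
  intros Hc i j Hij. induction Hij. lra. specialize (Hc m). lra.
Qed.

Lemma conv_down r a n : (forall j, (a <= j < a + n)%nat -> r (S j) - r j <= 0) -> r (a + n)%nat <= r a.
Proof.
  induction n; intros H. rewrite Nat.add_0_r; lra.
  rewrite Nat.add_succ_r. assert (r (S (a+n)) - r (a+n)%nat <= 0) by (apply H; lia).
  assert (r (a+n)%nat <= r a) by (apply IHn; intros; apply H; lia). lra.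
Qed.

Lemma conv_up r a n : (forall j, (a <= j < a + n)%nat -> 0 <= r (S j) - r j) -> r a <= r (a + n)%nat.
Proof.
  induction n; intros H. rewrite Nat.add_0_r; lra.
  rewrite Nat.add_succ_r. assert (0 <= r (S (a+n)) - r (a+n)%nat) by (apply H; lia).
  assert (r a <= r (a+n)%nat) by (apply IHn; intros; apply H; lia). lra.
Qed.

Lemma conv_max r a z b : convseq r -> (a <= z <= b)%nat -> r z <= Rmax (r a) (r b).
Proof.
  intros Hc [Haz Hzb].
  destruct (Nat.eq_dec z b) as [->|Hne]. apply Rmax_r.
  destruct (Rle_dec 0 (r (S z) - r z)) as [Hp|Hn].
  - replace b with (z + (b - z))%nat by lia.
    eapply Rle_trans; [apply conv_up|apply Rmax_r].
    intros j Hj. pose proof (convseq_mono r Hc z j ltac:(lia)). lra.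
  - replace z with (a + (z - a))%nat by lia.
    eapply Rle_trans; [apply conv_down|].
    intros j Hj. pose proof (convseq_mono r Hc j z ltac:(lia)). lra.
    apply Rmax_l.
Qed.

Lemma exs_ext (a b : nat -> R) : (forall n, a n = b n) -> ex_series a -> ex_series b.
Proof. intros H Ha. exact (ex_series_ext a b H Ha). Qed.

Lemma ex_series_lin2 (a b : nat -> R) c d : ex_series a -> ex_series b -> ex_series (fun z => c * a z + d * b z).
Proof.
  intros Ha Hb.
  pose proof (ex_series_scal_l c a Ha) as H1.
  pose proof (ex_series_scal_l d b Hb) as H2.
  exact (ex_series_plus _ _ H1 H2).
Qed.

Lemma Series_lin2 (a b : nat -> R) c d : ex_series a -> ex_series b -> Series (fun z => c * a z + d * b z) = c * Series a + d * Series b.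
Proof.
  intros Ha Hb. rewrite Series_plus. rewrite !Series_scal_l. auto.
  exact (ex_series_scal_l c a Ha). exact (ex_series_scal_l d b Hb).
Qed.

Lemma Series_pos_strict (a : nat -> R) k : (forall n, 0 <= a n) -> ex_series a -> 0 < a k -> 0 < Series a.
Proof. intros. pose proof (Series_ge_term a k H H0). lra. Qed.

Lemma least_nat (P : nat -> Prop) : (exists n, P n) -> exists m, P m /\ forall k, P k -> (m <= k)%nat.
Proof.
  intros [n Hn]. revert Hn. induction n as [n IH] using (well_founded_induction Wf_nat.lt_wf).
  intros Hn. destruct (classic (exists k, (k < n)%nat /\ P k)) as [[k [Hk Pk]]|Hno].
  - exact (IH k Hk Pk).
  - exists n. split; auto. intros k Pk. destruct (Nat.lt_ge_cases k n); auto.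
    exfalso; apply Hno; eauto.
Qed.

Lemma core (w r : nat -> R) :
  (forall z, 0 < w z) -> convseq r ->
  is_series (fun z => w z * r z) 0 -> is_series (fun z => w z * r z * INR z) 0 ->
  ex_series (fun z => w z * r z * INR z ^ 2) ->
  (exists z, r z <> 0) ->
  0 < Series (fun z => w z * r z * INR z ^ 2).
Proof.
  intros Hw Hc H0 H1 H2 [z0 Hz0].
  assert (E0 : Series (fun z => w z * r z) = 0) by (apply is_series_unique; auto).
  assert (E1 : Series (fun z => w z * r z * INR z) = 0) by (apply is_series_unique; auto).
  assert (X0 : ex_series (fun z => w z * r z)) by (eexists; eauto).
  assert (X1 : ex_series (fun z => w z * r z * INR z)) by (eexists; eauto).
  destruct (classic (exists z, r z < 0)) as [Hneg|Hnn].
  2:{ exfalso. assert (forall z, 0 <= r z) by (intros z; apply Rnot_lt_le; intro; apply Hnn; eauto).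
      assert (0 < r z0) by (specialize (H z0); lra).
      assert (0 < Series (fun z => w z * r z)).
      { apply (Series_pos_strict _ z0); auto. intros n; specialize (Hw n); specialize (H n); nra.
        specialize (Hw z0); nra. }
      lra. }
  destruct (least_nat _ Hneg) as [m [Hm Hmin]].
  assert (Hbefore : forall z, (z < m)%nat -> 0 <= r z).
  { intros z Hz. apply Rnot_lt_le; intro Hr. specialize (Hmin z Hr); lia. }
  destruct (classic (forall n, exists z, (n <= z)%nat /\ r z < 0)) as [Hunb|Hb].
  - exfalso.
    assert (Hafter : forall z, (m <= z)%nat -> r z < 0).
    { intros z Hz. destruct (Hunb z) as [b [Hb Hrb]].
      pose proof (conv_max r m z b Hc ltac:(lia)). unfold Rmax in H; destruct Rle_dec; lra. }
    set (s := INR m - /2).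
    assert (Hs : Series (fun z => w z * r z * (INR z - s)) = 0).
    { rewrite (Series_ext _ (fun z => 1 * (w z * r z * INR z) + (-s) * (w z * r z))) by (intros; ring).
      rewrite Series_lin2, E0, E1 by auto. ring. }
    assert (0 < Series (fun z => - (w z * r z * (INR z - s)))).
    { apply (Series_pos_strict _ m).
      - intros n. destruct (Nat.lt_ge_cases n m) as [Hl|Hl].
        + specialize (Hbefore n Hl). specialize (Hw n).
          assert (INR n + 1 <= INR m) by (rewrite <- S_INR; apply le_INR; lia).
          assert (0 <= w n * r n) by nra. unfold s. nra.
        + specialize (Hafter n Hl). apply le_INR in Hl. specialize (Hw n).
          assert (w n * r n < 0) by nra. unfold s. nra.
      - apply (exs_ext (fun z => (-1) * (w z * r z * INR z) + s * (w z * r z))). intros; ring.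
        apply ex_series_lin2; auto.
      - specialize (Hafter m (le_n _)). specialize (Hw m). unfold s. assert (w m * r m < 0) by nra. nra. }
    rewrite Series_opp, Hs in H. lra.
  -
    apply not_all_ex_not in Hb. destruct Hb as [B HB].
    assert (HB' : forall z, (B <= z)%nat -> 0 <= r z).
    { intros z Hz. apply Rnot_lt_le. intro. apply HB. eauto. }
    assert (Hex : exists u, forall z, r z < 0 -> (z <= u)%nat).
    { exists B. intros z Hz. destruct (Nat.le_gt_cases z B); auto. specialize (HB' z ltac:(lia)); lra. }
    destruct (least_nat _ Hex) as [n [Hn Hnmin]].
    assert (Hmn : (m <= n)%nat) by (apply Hn; auto).
    assert (Hnneg : r n < 0).
    { destruct n as [|n'].
      - assert (m = 0%nat) by lia. subst; auto.
      - apply Rnot_le_lt. intro Hrn.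
        assert (forall z, r z < 0 -> (z <= n')%nat).
        { intros z Hz. pose proof (Hn z Hz). destruct (Nat.eq_dec z (S n')). subst; lra. lia. }
        specialize (Hnmin n' H). lia. }
    assert (Hmid : forall z, (m <= z <= n)%nat -> r z < 0).
    { intros z Hz. pose proof (conv_max r m z n Hc Hz). unfold Rmax in H; destruct Rle_dec; lra. }
    assert (Hlate : forall z, (n < z)%nat -> 0 <= r z).
    { intros z Hz. apply Rnot_lt_le; intro Hr. specialize (Hn z Hr). lia. }
    set (s1 := INR m - /2). set (s2 := INR n + /2).
    assert (Hs : Series (fun z => w z * r z * ((INR z - s1) * (INR z - s2))) = Series (fun z => w z * r z * INR z ^ 2)).
    { rewrite (Series_ext _ (fun z => 1 * (w z * r z * INR z ^ 2) + 1 * ((-(s1+s2)) * (w z * r z * INR z) + (s1*s2) * (w z * r z)))) by (intros; ring).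
      assert (X2 : ex_series (fun z => (-(s1+s2)) * (w z * r z * INR z) + (s1*s2) * (w z * r z))) by (apply ex_series_lin2; auto).
      rewrite (Series_lin2 _ _ _ _ H2 X2). rewrite (Series_lin2 _ _ _ _ X1 X0), E0, E1. ring. }
    rewrite <- Hs. apply (Series_pos_strict _ m).
    + intros z. specialize (Hw z).
      destruct (Nat.lt_ge_cases z m) as [Hl|Hl].
      * specialize (Hbefore z Hl).
        assert (INR z + 1 <= INR m) by (rewrite <- S_INR; apply le_INR; lia).
        assert (INR m <= INR n) by (apply le_INR; lia).
        assert (0 <= w z * r z) by nra. unfold s1, s2.
        assert (0 <= (INR z - (INR m - / 2)) * (INR z - (INR n + / 2))) by nra. nra.
      * destruct (Nat.le_gt_cases z n) as [Hl2|Hl2].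
        -- specialize (Hmid z ltac:(lia)).
           apply le_INR in Hl. apply le_INR in Hl2.
           assert (w z * r z < 0) by nra. unfold s1, s2.
           assert ((INR z - (INR m - / 2)) * (INR z - (INR n + / 2)) < 0) by nra. nra.
        -- specialize (Hlate z Hl2).
           assert (INR n + 1 <= INR z) by (rewrite <- S_INR; apply le_INR; lia). apply le_INR in Hl.
           assert (0 <= w z * r z) by nra. unfold s1, s2.
           assert (0 <= (INR z - (INR m - / 2)) * (INR z - (INR n + / 2))) by nra. nra.
    + apply (exs_ext (fun z => 1 * (w z * r z * INR z ^ 2) + 1 * ((-(s1+s2)) * (w z * r z * INR z) + (s1*s2) * (w z * r z)))). intros; ring.
      apply ex_series_lin2; auto. apply ex_series_lin2; auto.
    + specialize (Hmid m ltac:(lia)). specialize (Hw m).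
      assert (INR m <= INR n) by (apply le_INR; lia).
      assert (w m * r m < 0) by nra. unfold s1, s2.
      assert ((INR m - (INR m - / 2)) * (INR m - (INR n + / 2)) < 0) by nra. nra.
Qed.


Section Main.
Variable f : nat -> R.
Hypothesis f_mono : forall z : nat, f z <= f (S z).
Hypothesis f_0 : f 0%nat = 0.
Hypothesis f_pos : forall z : nat, (0 < z)%nat -> 0 < f z.

Lemma F_pos z : 0 < ffact f z.
Proof. induction z; simpl. lra. apply Rmult_lt_0_compat; auto. apply f_pos; lia. Qed.

Lemma f_ge n m : (n <= m)%nat -> f n <= f m.
Proof. intros H; induction H. lra. specialize (f_mono m); lra. Qed.

Definition bk (k : nat) (n : nat) : R := INR n ^ k / ffact f n.

Lemma bk_succ k n : bk (S k) n = PS_incr_1 (PS_derive (bk k)) n.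
Proof.
  destruct n; unfold bk, PS_derive, PS_incr_1.
  - unfold zero; simpl. unfold Rdiv. ring.
  - change (INR (S n) ^ S k) with (INR (S n) * INR (S n) ^ k). unfold Rdiv. ring.
Qed.

Lemma bk_radius k : CV_radius (bk k) = CV_radius (bk 0).
Proof.
  induction k. reflexivity.
  rewrite (CV_radius_ext _ _ (bk_succ k)), CV_radius_incr_1, CV_radius_derive. auto.
Qed.

Lemma exists_big_f (th : R) : Rbar_lt th (thetabar f) -> exists n, (1 <= n)%nat /\ exp th < f n.
Proof.
  intros Hth. apply NNPP. intro Hno.
  assert (Hle : Rbar_le (thetabar f) th).
  { unfold thetabar. eapply Rbar_le_trans; [apply Lim_seq_le_loc with (v := fun _ => th)|rewrite Lim_seq_const; apply Rbar_le_refl].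
    exists 1%nat. intros n Hn. apply Rnot_lt_le. intro Hlt. apply Hno. exists n. split; auto.
    pose proof (f_pos n ltac:(lia)). rewrite <- (exp_ln (f n)) by auto. apply exp_increasing. auto. }
  destruct (thetabar f); simpl in *; lra.
Qed.

Lemma div_le_one a b : 0 < b -> a <= b -> a / b <= 1.
Proof. intros Hb Hab. apply Rmult_le_reg_r with b; auto. unfold Rdiv. rewrite Rmult_assoc, Rinv_l; lra. Qed.

Lemma bounded_upto (g : nat -> R) N : exists K, forall m, (m <= N)%nat -> g m <= K.
Proof.
  induction N. exists (g 0%nat). intros m Hm. replace m with 0%nat by lia. lra.
  destruct IHN as [K HK]. exists (Rmax K (g (S N))). intros m Hm.
  destruct (Nat.eq_dec m (S N)). subst. apply Rmax_r.
  eapply Rle_trans. apply HK; lia. apply Rmax_l.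
Qed.

Lemma dom_radius (th : R) : Rbar_lt th (thetabar f) -> Rbar_lt (exp th) (CV_radius (bk 0)).
Proof.
  intros Hth. destruct (exists_big_f th Hth) as [n [Hn Hc]].
  set (c := f n) in *. set (y := (exp th + c) / 2).
  pose proof (exp_pos th) as Hx.
  set (g := fun m => c ^ m / ffact f m).
  destruct (bounded_upto g n) as [K HK].
  assert (Hdec : forall j, g (n + j)%nat <= g n).
  { induction j. rewrite Nat.add_0_r; lra.
    eapply Rle_trans; [|exact IHj]. rewrite Nat.add_succ_r. unfold g. simpl.
    pose proof (F_pos (n + j)). assert (c <= f (S (n+j))) by (apply f_ge; lia).
    assert (0 < f (S (n+j))) by (apply f_pos; lia).
    assert (0 <= c ^ (n+j)) by (apply pow_le; lra).
    unfold Rdiv. rewrite Rinv_mult.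
    replace (c * c ^ (n + j) * (/ ffact f (n + j) * / f (S (n + j)))) with ((c ^ (n + j) * / ffact f (n + j)) * (c / f (S (n+j)))) by (field; lra).
    rewrite <- (Rmult_1_r (c ^ (n + j) * / ffact f (n + j))) at 2.
    apply Rmult_le_compat_l. apply Rmult_le_pos; auto. left; apply Rinv_0_lt_compat; auto.
    apply div_le_one; lra. }
  assert (HgK : forall m, g m <= K).
  { intros m. destruct (Nat.le_gt_cases m n). auto.
    replace m with (n + (m - n))%nat by lia. eapply Rle_trans. apply Hdec. apply HK; lia. }
  assert (Hdisk : CV_disk (bk 0) y).
  { unfold CV_disk. apply (exs_le _ (fun m => K * (y / c) ^ m)).
    - intros m. rewrite Rabs_Rabsolu.
      unfold bk. simpl pow at 1. rewrite Rabs_pos_eq.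
      + specialize (HgK m). unfold g in HgK. pose proof (F_pos m).
        assert (0 < c) by lra.
        replace (1 / ffact f m * y ^ m) with ((c ^ m / ffact f m) * (y / c) ^ m).
        apply Rmult_le_compat_r. apply pow_le. apply Rdiv_le_0_compat; unfold y; lra. auto.
        unfold Rdiv. rewrite Rpow_mult_distr, pow_inv. field. split. apply Rgt_not_eq; auto. apply pow_nonzero; lra.
      + apply Rmult_le_pos. apply Rdiv_le_0_compat. lra. apply F_pos. apply pow_le; unfold y; lra.
    - apply (ex_series_scal_l K (fun m => (y/c)^m)). apply ex_series_geom.
      rewrite Rabs_pos_eq. apply -> Rdiv_lt_1; unfold y; lra. apply Rdiv_le_0_compat; unfold y; lra. }
  apply Rbar_lt_le_trans with y. simpl. unfold y; lra.
  destruct (Lub_Rbar_correct (CV_disk (bk 0))) as [Hub _]. apply Hub. exact Hdisk.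
Qed.

Definition U (th : R) := Rbar_lt th (thetabar f).
Definition Sk (k : nat) (th : R) : R := PSeries (bk k) (exp th).
Definition P (k : nat) (th : R) (z : nat) : R := bk k z * exp th ^ z.

Lemma P_ex k th : U th -> ex_series (P k th).
Proof.
  intros Hu. apply ex_series_Rabs. unfold P. apply CV_disk_inside.
  rewrite (bk_radius k), Rabs_pos_eq. apply dom_radius; auto. left; apply exp_pos.
Qed.

Lemma Sk_eq k th : Sk k th = Series (P k th).
Proof. reflexivity. Qed.

Lemma P_nonneg k th z : 0 <= P k th z.
Proof.
  unfold P, bk. apply Rmult_le_pos. apply Rdiv_le_0_compat. apply pow_le, pos_INR. apply F_pos.
  apply pow_le. left; apply exp_pos.
Qed.

Lemma S0_pos th : U th -> 0 < Sk 0 th.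
Proof.
  intros Hu. rewrite Sk_eq. apply (Series_pos_strict _ 0%nat). apply P_nonneg. apply P_ex; auto.
  unfold P, bk. simpl. lra.
Qed.

Lemma S1_pos th : U th -> 0 < Sk 1 th.
Proof.
  intros Hu. rewrite Sk_eq. apply (Series_pos_strict _ 1%nat). apply P_nonneg. apply P_ex; auto.
  unfold P, bk. simpl. pose proof (f_pos 1 ltac:(lia)). pose proof (exp_pos th).
  apply Rmult_lt_0_compat; [|nra]. apply Rdiv_lt_0_compat; nra.
Qed.

Lemma Sk_deriv k th : U th -> is_derive (Sk k) th (Sk (S k) th).
Proof.
  intros Hu. unfold Sk.
  eapply is_derive_eq.
  - apply (is_derive_comp (PSeries (bk k)) exp th).
    apply is_derive_PSeries. rewrite (bk_radius k), Rabs_pos_eq. apply dom_radius; auto. left; apply exp_pos.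
    apply is_derive_exp.
  - change (scal (exp th) (PSeries (PS_derive (bk k)) (exp th))) with (exp th * PSeries (PS_derive (bk k)) (exp th)).
    rewrite <- PSeries_incr_1. apply PSeries_ext. intros n; rewrite bk_succ; reflexivity.
Qed.

Lemma U_open th : U th -> locally th U.
Proof.
  unfold U. intros Hu. destruct (thetabar f) as [t| |] eqn:E; simpl in Hu.
  - assert (0 < t - th) by lra. exists (mkposreal _ H). intros y Hy.
    unfold ball in Hy; simpl in Hy. unfold AbsRing_ball, abs, minus, plus, opp in Hy; simpl in Hy.
    apply Rabs_lt_between in Hy. simpl. lra.
  - exists (mkposreal _ Rlt_0_1). intros y _. simpl. auto.
  - contradiction.
Qed.

Lemma U_down a b : a <= b -> U b -> U a.
Proof.
  unfold U. intros Hab Hb. destruct (thetabar f); simpl in *; auto. lra.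
Qed.

Definition A (k : nat) (th : R) (z : nat) : R := f z * P k th z.

Lemma A_shift k th m : A k th (S m) = exp th * (INR (S m) ^ k / ffact f m * exp th ^ m).
Proof.
  unfold A, P, bk. simpl ffact. simpl pow. pose proof (F_pos m). pose proof (f_pos (S m) ltac:(lia)).
  field. split; apply Rgt_not_eq; auto.
Qed.

Lemma A_series k th v : (forall m, INR (S m) ^ k / ffact f m * exp th ^ m = v m) -> ex_series v ->
  ex_series (A k th) /\ Series (A k th) = exp th * Series v.
Proof.
  intros Hv Hex.
  assert (E : forall m, A k th (S m) = exp th * v m) by (intros; rewrite A_shift, Hv; auto).
  assert (Ex1 : ex_series (fun m => A k th (S m))).
  { apply (exs_ext (fun m => exp th * v m)). intros; auto.
    exact (ex_series_scal_l (exp th) v Hex). }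
  split. apply ex_series_incr_1. auto.
  rewrite Series_incr_1_aux. rewrite (Series_ext _ _ E). apply Series_scal_l.
  unfold A. rewrite f_0. ring.
Qed.

Lemma A0 th : U th -> ex_series (A 0 th) /\ Series (A 0 th) = exp th * Sk 0 th.
Proof.
  intros Hu. apply A_series. intros m; unfold P, bk; simpl; ring. apply P_ex; auto.
Qed.

Lemma A1 th : U th -> ex_series (A 1 th) /\ Series (A 1 th) = exp th * (Sk 1 th + Sk 0 th).
Proof.
  intros Hu. rewrite !Sk_eq, <- Series_plus by (apply P_ex; auto).
  apply A_series. intros m; unfold P, bk; rewrite S_INR; simpl; field. apply Rgt_not_eq, F_pos.
  apply (exs_ext _ _ (fun n => eq_refl)). pose proof (ex_series_plus _ _ (P_ex 1 th Hu) (P_ex 0 th Hu)). exact H.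
Qed.

Lemma A2 th : U th -> ex_series (A 2 th) /\ Series (A 2 th) = exp th * (Sk 2 th + 2 * Sk 1 th + Sk 0 th).
Proof.
  intros Hu. rewrite !Sk_eq.
  assert (X : ex_series (fun z => 1 * P 2 th z + 1 * (2 * P 1 th z + 1 * P 0 th z))).
  { apply ex_series_lin2. apply P_ex; auto. apply ex_series_lin2; apply P_ex; auto. }
  replace (Series (P 2 th) + 2 * Series (P 1 th) + Series (P 0 th)) with
    (Series (fun z => 1 * P 2 th z + 1 * (2 * P 1 th z + 1 * P 0 th z))).
  apply A_series. intros m; unfold P, bk; rewrite S_INR; simpl; field. apply Rgt_not_eq, F_pos. auto.
  rewrite Series_lin2. rewrite Series_lin2. ring. apply P_ex; auto. apply P_ex; auto. apply P_ex; auto.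
  apply ex_series_lin2; apply P_ex; auto.
Qed.

Lemma deriv_mul (g h : R -> R) (x dg dh : R) : is_derive g x dg -> is_derive h x dh ->
  is_derive (fun t => g t * h t) x (dg * h x + g x * dh).
Proof. intros Hg Hh. exact (is_derive_mult g h x dg dh Hg Hh Rmult_comm). Qed.

Lemma deriv_div (g h : R -> R) (x dg dh : R) : is_derive g x dg -> is_derive h x dh -> h x <> 0 ->
  is_derive (fun t => g t / h t) x ((dg * h x - g x * dh) / (h x) ^ 2).
Proof.
  intros Hg Hh Hn. eapply is_derive_eq. apply deriv_mul. exact Hg. apply is_derive_inv; [exact Hh|auto].
  simpl. field; auto.
Qed.

Lemma deriv_minus (g h : R -> R) (x dg dh : R) : is_derive g x dg -> is_derive h x dh ->
  is_derive (fun t => g t - h t) x (dg - dh).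
Proof. intros Hg Hh. exact (is_derive_minus g h x dg dh Hg Hh). Qed.

Definition rh (th : R) := Sk 1 th / Sk 0 th.
Definition Vh (th : R) := Sk 2 th / Sk 0 th - (Sk 1 th / Sk 0 th) * (Sk 1 th / Sk 0 th).
Definition Kh (th : R) := Sk 3 th / Sk 0 th - 3 * (Sk 2 th * Sk 1 th) / (Sk 0 th * Sk 0 th)
   + 2 * ((Sk 1 th / Sk 0 th) * (Sk 1 th / Sk 0 th) * (Sk 1 th / Sk 0 th)).

Lemma rh_deriv th : U th -> is_derive rh th (Vh th).
Proof.
  intros Hu. pose proof (S0_pos th Hu). unfold rh, Vh.
  eapply is_derive_eq. apply deriv_div; try apply Sk_deriv; auto; lra.
  field. lra.
Qed.

Lemma Vh_deriv th : U th -> is_derive Vh th (Kh th).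
Proof.
  intros Hu. pose proof (S0_pos th Hu). unfold Vh, Kh.
  eapply is_derive_eq.
  apply deriv_minus. apply deriv_div; try apply Sk_deriv; auto; lra.
  apply deriv_mul; apply deriv_div; try apply Sk_deriv; auto; lra.
  simpl. field. lra.
Qed.

Lemma Vh_pos th : U th -> 0 < Vh th.
Proof.
  intros Hu. pose proof (S0_pos th Hu) as H0. pose proof (S1_pos th Hu) as H1.
  set (rr := rh th).
  assert (Hr : 0 < rr) by (unfold rr, rh; apply Rdiv_lt_0_compat; auto).
  assert (X : ex_series (fun z => 1 * P 2 th z + 1 * ((-2 * rr) * P 1 th z + (rr * rr) * P 0 th z))).
  { apply ex_series_lin2. apply P_ex; auto. apply ex_series_lin2; apply P_ex; auto. }
  assert (Hs : 0 < Series (fun z => 1 * P 2 th z + 1 * ((-2 * rr) * P 1 th z + (rr * rr) * P 0 th z))).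
  { apply (Series_pos_strict _ 0%nat); auto.
    - intros z. replace (1 * P 2 th z + 1 * (-2 * rr * P 1 th z + rr * rr * P 0 th z)) with
        (P 0 th z * (INR z - rr) ^ 2). apply Rmult_le_pos. apply P_nonneg. apply pow2_ge_0.
      unfold P, bk. simpl. field. apply Rgt_not_eq, F_pos.
    - unfold P, bk; simpl. field_simplify. nra. }
  rewrite Series_lin2, Series_lin2, <- !Sk_eq in Hs; try apply P_ex; auto.
  2:{ apply ex_series_lin2; apply P_ex; auto. }
  unfold Vh. unfold rr, rh in Hs.
  assert (0 < (Sk 2 th - Sk 1 th * Sk 1 th / Sk 0 th) / Sk 0 th).
  { apply Rdiv_lt_0_compat; auto. replace (Sk 2 th - Sk 1 th * Sk 1 th / Sk 0 th) with
      (1 * Sk 2 th + 1 * (-2 * (Sk 1 th / Sk 0 th) * Sk 1 th + Sk 1 th / Sk 0 th * (Sk 1 th / Sk 0 th) * Sk 0 th)).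
    auto. field. lra. }
  replace (Sk 2 th / Sk 0 th - Sk 1 th / Sk 0 th * (Sk 1 th / Sk 0 th)) with ((Sk 2 th - Sk 1 th * Sk 1 th / Sk 0 th) / Sk 0 th).
  auto. field. lra.
Qed.

Lemma Zpart_eq th : Zpart f th = Sk 0 th.
Proof.
  unfold Zpart. rewrite Sk_eq. apply Series_ext. intros z. unfold P, bk. rewrite exp_INR_pow. simpl. field.
  apply Rgt_not_eq, F_pos.
Qed.

Lemma mu_eq th z : U th -> mu f th z = P 0 th z / Sk 0 th.
Proof.
  intros Hu. unfold mu. rewrite Zpart_eq, exp_INR_pow. unfold P, bk. simpl. field.
  split; apply Rgt_not_eq. apply F_pos. apply S0_pos; auto.
Qed.

Lemma rho_eq th : U th -> rho_of f th = rh th.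
Proof.
  intros Hu. unfold rho_of, rh. rewrite (Series_ext _ (fun z => / Sk 0 th * P 1 th z)).
  rewrite Series_scal_l, <- Sk_eq. field. apply Rgt_not_eq, S0_pos; auto.
  intros z. rewrite mu_eq by auto. unfold P, bk. simpl. field. split; apply Rgt_not_eq. apply F_pos. apply S0_pos; auto.
Qed.

Lemma Hser_eq th : U th -> Series (fun z => f z * mu f th z) = exp th.
Proof.
  intros Hu. rewrite (Series_ext _ (fun z => / Sk 0 th * A 0 th z)).
  rewrite Series_scal_l. destruct (A0 th Hu) as [_ ->]. field. apply Rgt_not_eq, S0_pos; auto.
  intros z. rewrite mu_eq by auto. unfold A. field. apply Rgt_not_eq, S0_pos; auto.
Qed.

Definition Q (th : R) := exp th * (Vh th - Kh th).

Lemma alg (x s0 s1 s2 s3 : R) : 0 < s0 -> 0 < s2 / s0 - s1 / s0 * (s1 / s0) ->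
  let V := s2 / s0 - s1 / s0 * (s1 / s0) in
  let K := s3 / s0 - 3 * (s2 * s1) / (s0 * s0) + 2 * (s1 / s0 * (s1 / s0) * (s1 / s0)) in
  let be := x / V in let al := x - be * (s1 / s0) in
  x * s0 - al * s0 - be * s1 = 0 /\ x * (s1 + s0) - al * s1 - be * s2 = 0 /\
  x * (s2 + 2 * s1 + s0) - al * s2 - be * s3 = s0 * (x * (V - K)) / V.
Proof.
  intros H0 HV V K be al.
  assert (HV' : s2 * s0 - s1 * s1 <> 0).
  { intro E. assert (V = 0). unfold V. replace (s2 / s0 - s1 / s0 * (s1 / s0)) with ((s2 * s0 - s1 * s1) / (s0 * s0)) by (field; lra). rewrite E. field. lra. unfold V in *. lra. }
  unfold al, be, V, K. repeat split; field; split; lra.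
Qed.

Definition rfun (th : R) (z : nat) : R := f z - (exp th - exp th / Vh th * rh th) - exp th / Vh th * INR z.

Lemma core_ident th : U th ->
  is_series (fun z => P 0 th z * rfun th z) 0 /\
  is_series (fun z => P 0 th z * rfun th z * INR z) 0 /\
  ex_series (fun z => P 0 th z * rfun th z * INR z ^ 2) /\
  Series (fun z => P 0 th z * rfun th z * INR z ^ 2) = Sk 0 th * Q th / Vh th.
Proof.
  intros Hu.
  pose proof (S0_pos th Hu) as H0. pose proof (Vh_pos th Hu) as HV.
  destruct (A0 th Hu) as [XA0 EA0]. destruct (A1 th Hu) as [XA1 EA1]. destruct (A2 th Hu) as [XA2 EA2].
  pose proof (P_ex 0 th Hu) as X0. pose proof (P_ex 1 th Hu) as X1.
  pose proof (P_ex 2 th Hu) as X2. pose proof (P_ex 3 th Hu) as X3.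
  set (be := exp th / Vh th). set (al := exp th - be * rh th).
  assert (Er : forall z, rfun th z = f z - al - be * INR z) by reflexivity.
  assert (G : forall (h a b c : nat -> R), ex_series a -> ex_series b -> ex_series c ->
     (forall z, h z = 1 * a z + 1 * ((-al) * b z + (-be) * c z)) ->
     ex_series h /\ Series h = Series a - al * Series b - be * Series c).
  { intros h a b c Xa Xb Xc E. rewrite (Series_ext _ _ E).
    assert (Xbc : ex_series (fun z => (-al) * b z + (-be) * c z)) by (apply ex_series_lin2; auto).
    split. apply (exs_ext _ _ (fun z => eq_sym (E z))). apply ex_series_lin2; auto.
    rewrite Series_lin2, Series_lin2; auto. ring. }
  destruct (G (fun z => P 0 th z * rfun th z) (A 0 th) (P 0 th) (P 1 th)) as [Y0 Z0]; auto.
  { intros z. rewrite Er. unfold A, P, bk. simpl. field. apply Rgt_not_eq, F_pos. }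
  destruct (G (fun z => P 0 th z * rfun th z * INR z) (A 1 th) (P 1 th) (P 2 th)) as [Y1 Z1]; auto.
  { intros z. rewrite Er. unfold A, P, bk. simpl. field. apply Rgt_not_eq, F_pos. }
  destruct (G (fun z => P 0 th z * rfun th z * INR z ^ 2) (A 2 th) (P 2 th) (P 3 th)) as [Y2 Z2]; auto.
  { intros z. rewrite Er. unfold A, P, bk. simpl. field. apply Rgt_not_eq, F_pos. }
  rewrite <- !Sk_eq in *. rewrite EA0 in Z0. rewrite EA1 in Z1. rewrite EA2 in Z2.
  unfold Vh in HV.
  destruct (alg (exp th) (Sk 0 th) (Sk 1 th) (Sk 2 th) (Sk 3 th) H0 HV) as [B0 [B1 B2]].
  fold (Vh th) in B0, B1, B2. fold (rh th) in B0, B1, B2. fold (Kh th) in B2.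
  fold be in B0, B1, B2. fold al in B0, B1, B2.
  split; [|split; [|split]].
  - rewrite <- B0, <- Z0. apply Series_correct; auto.
  - rewrite <- B1, <- Z1. apply Series_correct; auto.
  - auto.
  - rewrite Z2, B2. unfold Q. reflexivity.
Qed.

Lemma core_scaled th c : U th -> c <> 0 -> convseq (fun z => c * rfun th z) -> (exists z, rfun th z <> 0) -> 0 < c * Q th.
Proof.
  intros Hu Hc0 Hc [z0 Hz0].
  destruct (core_ident th Hu) as [I0 [I1 [X2 E2]]].
  pose proof (S0_pos th Hu). pose proof (Vh_pos th Hu).
  assert (HH : 0 < Series (fun z => P 0 th z * (c * rfun th z) * INR z ^ 2)).
  { apply core; auto.
    - intros; unfold P, bk; simpl. apply Rmult_lt_0_compat. apply Rdiv_lt_0_compat. lra. apply F_pos.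
      apply pow_lt, exp_pos.
    - apply (iss_ext (fun z => c * (P 0 th z * rfun th z))). intros; ring.
      apply iss_scal0; exact I0.
    - apply (iss_ext (fun z => c * (P 0 th z * rfun th z * INR z))). intros; ring.
      apply iss_scal0; exact I1.
    - apply (exs_ext (fun z => c * (P 0 th z * rfun th z * INR z ^ 2))). intros; ring.
      exact (ex_series_scal_l c _ X2).
    - exists z0. intro E. apply Rmult_integral in E. destruct E; auto. }
  rewrite (Series_ext _ (fun z => c * (P 0 th z * rfun th z * INR z ^ 2))) in HH by (intros; ring).
  rewrite Series_scal_l, E2 in HH.
  replace (c * (Sk 0 th * Q th / Vh th)) with ((c * Q th) * (Sk 0 th / Vh th)) in HH by (field; lra).
  assert (0 < Sk 0 th / Vh th) by (apply Rdiv_lt_0_compat; auto).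
  apply (Rmult_lt_reg_r (Sk 0 th / Vh th)); auto. lra.
Qed.

Lemma rfun_zero th : U th -> (forall z, rfun th z = 0) -> Q th = 0.
Proof.
  intros Hu Hz. destruct (core_ident th Hu) as [_ [_ [_ E2]]].
  rewrite (Series_ext _ (fun _ => 0)) in E2 by (intros; rewrite Hz; ring).
  rewrite Series_zero in E2. pose proof (S0_pos th Hu). pose proof (Vh_pos th Hu).
  assert (Sk 0 th * Q th = 0).
  { replace (Sk 0 th * Q th) with ((Sk 0 th * Q th / Vh th) * Vh th) by (field; lra). rewrite <- E2. ring. }
  apply Rmult_integral in H1. destruct H1; lra.
Qed.

Lemma nonlin_rfun th : ~ flinear f -> exists z, rfun th z <> 0.
Proof.
  intros Hnl. apply NNPP. intro Hno. apply Hnl.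
  assert (Hz : forall z, rfun th z = 0) by (intros z; apply NNPP; intro; apply Hno; eauto).
  exists (exp th / Vh th). intros z. pose proof (Hz z) as Ez. pose proof (Hz 0%nat) as E0.
  unfold rfun in Ez, E0. rewrite f_0 in E0. simpl in E0. lra.
Qed.

Lemma lin_rfun th : U th -> flinear f -> forall z, rfun th z = 0.
Proof.
  intros Hu [c Hc] z.
  destruct (core_ident th Hu) as [I0 [I1 _]].
  set (be := exp th / Vh th) in *. set (al := exp th - be * rh th) in *.
  assert (Er : forall z, P 0 th z * rfun th z = (c - be) * P 1 th z + (- al) * P 0 th z).
  { intros y. unfold rfun. fold be. fold al. rewrite Hc. unfold P, bk. simpl. field. apply Rgt_not_eq, F_pos. }
  assert (Er1 : forall z, P 0 th z * rfun th z * INR z = (c - be) * P 2 th z + (- al) * P 1 th z).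
  { intros y. unfold rfun. fold be. fold al. rewrite Hc. unfold P, bk. simpl. field. apply Rgt_not_eq, F_pos. }
  apply is_series_unique in I0. apply is_series_unique in I1.
  rewrite (Series_ext _ _ Er), Series_lin2, <- !Sk_eq in I0 by (apply P_ex; auto).
  rewrite (Series_ext _ _ Er1), Series_lin2, <- !Sk_eq in I1 by (apply P_ex; auto).
  pose proof (S0_pos th Hu). pose proof (Vh_pos th Hu). unfold Vh in H0.
  set (s0 := Sk 0 th) in *. set (s1 := Sk 1 th) in *. set (s2 := Sk 2 th) in *.
  assert (Hd : 0 < s2 * s0 - s1 * s1).
  { replace (s2 * s0 - s1 * s1) with ((s2 / s0 - s1 / s0 * (s1 / s0)) * (s0 * s0)) by (field; lra).
    apply Rmult_lt_0_compat; nra. }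
  assert (Ecb : c - be = 0).
  { assert ((c - be) * (s2 * s0 - s1 * s1) = 0).
    { replace ((c - be) * (s2 * s0 - s1 * s1)) with (s0 * ((c - be) * s2 + - al * s1) - s1 * ((c - be) * s1 + - al * s0)) by ring.
      rewrite I0, I1. ring. }
    apply Rmult_integral in H1. destruct H1; lra. }
  assert (Eal : al = 0).
  { rewrite Ecb in I0. assert (al * s0 = 0) by lra. apply Rmult_integral in H1. destruct H1; lra. }
  unfold rfun. fold be. fold al. rewrite Hc.
  replace (c * INR z - al - be * INR z) with ((c - be) * INR z - al) by ring. rewrite Ecb, Eal. ring.
Qed.

Lemma rh_dpt th : U th -> derivable_pt rh th.
Proof. intros Hu. exists (Vh th). apply is_derive_Reals. apply rh_deriv; auto. Qed.

Lemma rh_cont th : U th -> continuity_pt rh th.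
Proof. intros Hu. apply derivable_continuous_pt. apply rh_dpt; auto. Qed.

Lemma rh_incr a b : U b -> a < b -> rh a < rh b.
Proof.
  intros Hb Hab.
  destruct (MVT_gen rh a b Vh) as [c [Hc Ec]].
  - intros x Hx. rewrite Rmin_left, Rmax_right in Hx by lra. apply rh_deriv. apply (U_down x b); auto; lra.
  - intros x Hx. rewrite Rmin_left, Rmax_right in Hx by lra. apply rh_cont. apply (U_down x b); auto; lra.
  - rewrite Rmin_left, Rmax_right in Hc by lra.
    assert (0 < Vh c) by (apply Vh_pos; apply (U_down c b); auto; lra).
    assert (0 < Vh c * (b - a)) by (apply Rmult_lt_0_compat; lra). lra.
Qed.

Lemma thetabar_lb : Rbar_le (ln (f 1%nat)) (thetabar f).
Proof.
  unfold thetabar. eapply Rbar_le_trans; [|apply Lim_seq_le_loc with (u := fun _ => ln (f 1%nat))].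
  rewrite Lim_seq_const. apply Rbar_le_refl.
  exists 1%nat. intros n Hn. pose proof (f_pos 1 ltac:(lia)). apply ln_le; auto. apply f_ge; auto.
Qed.

Lemma U_nonempty : exists th, U th.
Proof.
  pose proof thetabar_lb. unfold U. destruct (thetabar f) as [t| |]; simpl in *.
  exists (t - 1). simpl. lra. exists 0. simpl; auto. contradiction.
Qed.

Lemma S0_ge1 th : U th -> 1 <= Sk 0 th.
Proof.
  intros Hu. rewrite Sk_eq. replace 1 with (P 0 th 0%nat). apply Series_ge_term. apply P_nonneg. apply P_ex; auto.
  unfold P, bk; simpl; field.
Qed.

Lemma rh_small r : 0 < r -> exists th, U th /\ rh th < r.
Proof.
  intros Hr. destruct U_nonempty as [t0 Ht0].
  pose proof (S1_pos t0 Ht0) as H1.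
  set (d := Rmin 0 (ln (r / (2 * Sk 1 t0)))).
  assert (Hd : d <= 0) by apply Rmin_l.
  exists (t0 + d). assert (Hu : U (t0 + d)) by (apply (U_down _ t0); auto; lra). split; auto.
  assert (Hle : Sk 1 (t0 + d) <= exp d * Sk 1 t0).
  { rewrite !Sk_eq. rewrite <- Series_scal_l. apply Series_le.
    - intros z. split. apply P_nonneg. unfold P, bk. rewrite <- !exp_INR_pow.
      destruct z. { simpl. unfold Rdiv. rewrite !Rmult_0_l. lra. }
      rewrite Rmult_plus_distr_r, exp_plus.
      assert (exp (d * INR (S z)) <= exp d).
      { apply exp_le. rewrite S_INR. pose proof (pos_INR z). nra. }
      pose proof (exp_pos (t0 * INR (S z))). pose proof (exp_pos (d * INR (S z))).
      assert (0 <= INR (S z) ^ 1 / ffact f (S z)) by (apply Rdiv_le_0_compat; [apply pow_le, pos_INR|apply F_pos]).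
      set (aa := INR (S z) ^ 1 / ffact f (S z)) in *. assert (0 <= aa * exp (t0 * INR (S z))) by (apply Rmult_le_pos; lra). nra.
    - apply (ex_series_scal_l (exp d) (P 1 t0)). apply P_ex; auto. }
  assert (exp d * Sk 1 t0 <= r / 2).
  { assert (exp d <= r / (2 * Sk 1 t0)).
    { unfold d. unfold Rmin. destruct Rle_dec.
      - rewrite exp_0. assert (0 < r / (2 * Sk 1 t0)) by (apply Rdiv_lt_0_compat; lra). rewrite <- (exp_ln (r / (2 * Sk 1 t0))) by auto. rewrite <- exp_0. apply exp_le. auto.
      - rewrite exp_ln. lra. apply Rdiv_lt_0_compat; lra. }
    apply (Rmult_le_compat_r (Sk 1 t0)) in H; [|lra]. replace (r / (2 * Sk 1 t0) * Sk 1 t0) with (r/2) in H by (field; lra). lra. }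
  pose proof (S0_ge1 (t0 + d) Hu). pose proof (S1_pos (t0 + d) Hu).
  unfold rh. apply Rle_lt_trans with (Sk 1 (t0 + d)).
  apply Rmult_le_reg_r with (Sk 0 (t0 + d)). lra. unfold Rdiv. rewrite Rmult_assoc, Rinv_l by lra. nra. lra.
Qed.

Lemma sum_le_Series (a : nat -> R) N : (forall n, 0 <= a n) -> ex_series a -> sum_f_R0 a N <= Series a.
Proof.
  intros Ha He. rewrite (Series_incr_n a (S N)) by (auto; lia). simpl.
  assert (0 <= Series (fun j => a (S (N + j)))).
  { rewrite <- Series_zero. apply Series_le. intros; split; [lra|apply Ha].
    apply (ex_series_incr_n a (S N)) in He. exact He. }
  lra.
Qed.

Lemma tail_bound th N : U th -> INR (S N) * (Sk 0 th - sum_f_R0 (P 0 th) N) <= Sk 1 th.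
Proof.
  intros Hu. rewrite !Sk_eq.
  pose proof (P_ex 0 th Hu) as X0. pose proof (P_ex 1 th Hu) as X1.
  rewrite (Series_incr_n (P 0 th) (S N)), (Series_incr_n (P 1 th) (S N)) by (auto; lia). simpl pred.
  assert (0 <= sum_f_R0 (P 1 th) N) by (apply cond_pos_sum; intros; apply P_nonneg).
  assert (INR (S N) * Series (fun k => P 0 th (S N + k)) <= Series (fun k => P 1 th (S N + k))).
  { rewrite <- Series_scal_l. apply Series_le.
    - intros k. split. apply Rmult_le_pos. apply pos_INR. apply P_nonneg.
      unfold P, bk. rewrite pow_O, pow_1.
      assert (INR (S N) <= INR (S N + k)) by (apply le_INR; lia).
      pose proof (F_pos (S N + k)). pose proof (pow_lt (exp th) (S N + k) (exp_pos th)).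
      unfold Rdiv. assert (0 < / ffact f (S N + k)) by (apply Rinv_0_lt_compat; auto).
      set (pp := / ffact f (S N + k)) in *. set (qq := exp th ^ (S N + k)) in *.
      assert (0 < pp * qq) by nra. nra.
    - apply (ex_series_incr_n (P 1 th) (S N)). auto. }
  lra.
Qed.

Lemma rh_from_tail th N : U th -> 2 * sum_f_R0 (P 0 th) N <= Sk 0 th -> INR (S N) / 2 <= rh th.
Proof.
  intros Hu H. pose proof (tail_bound th N Hu). pose proof (S0_pos th Hu).
  unfold rh. apply Rmult_le_reg_r with (Sk 0 th); auto.
  replace (Sk 1 th / Sk 0 th * Sk 0 th) with (Sk 1 th) by (field; lra).
  pose proof (pos_INR (S N)). nra.
Qed.

Lemma bern (e : R) n : 0 <= e <= 1 -> 1 - INR n * e <= (1 - e) ^ n.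
Proof.
  intros He. induction n. simpl. lra.
  rewrite S_INR. simpl. assert (0 <= 1 - e) by lra.
  assert (0 <= (1 - e) ^ n) by (apply pow_le; lra). pose proof (pos_INR n). nra.
Qed.

Lemma f_le_L t : thetabar f = Finite t -> forall z, (1 <= z)%nat -> f z <= exp t.
Proof.
  intros Ht z Hz. apply Rnot_lt_le. intro Hlt.
  assert (Rbar_le (ln (f z)) (thetabar f)).
  { unfold thetabar. eapply Rbar_le_trans; [|apply Lim_seq_le_loc with (u := fun _ => ln (f z))].
    rewrite Lim_seq_const. apply Rbar_le_refl.
    exists z. intros n Hn. pose proof (f_pos z ltac:(lia)). apply ln_le; auto. apply f_ge; auto. }
  rewrite Ht in H. simpl in H. apply exp_le in H. rewrite exp_ln in H by (apply f_pos; lia). lra.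
Qed.

Lemma rh_large r : exists th, U th /\ r < rh th.
Proof.
  destruct (INR_unbounded (2 * r)) as [N0 HN0].
  set (N := N0). assert (HN : r < INR (S N) / 2) by (rewrite S_INR; unfold N; lra).
  assert (Hgoal : forall th, U th -> 2 * sum_f_R0 (P 0 th) N <= Sk 0 th -> exists th, U th /\ r < rh th).
  { intros th Hu H. exists th. split; auto. pose proof (rh_from_tail th N Hu H). lra. }
  destruct (thetabar f) as [t| |] eqn:Etb.
  -
    set (L := exp t). pose proof (exp_pos t) as HL. fold L in HL.
    assert (HF : forall z, ffact f z <= L ^ z).
    { induction z. simpl; lra. simpl. pose proof (F_pos z). pose proof (f_le_L t Etb (S z) ltac:(lia)).
      pose proof (f_pos (S z) ltac:(lia)). fold L in H0. rewrite Rmult_comm. apply Rmult_le_compat; lra. }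
    set (C := sum_f_R0 (fun z => L ^ z / ffact f z) N).
    assert (HC : 0 <= C) by (apply cond_pos_sum; intros; apply Rdiv_le_0_compat; [apply pow_le; lra|apply F_pos]).
    destruct (INR_unbounded (4 * C)) as [M HM].
    set (e := / (2 * INR (S M))).
    assert (HSM : 0 < INR (S M)) by (apply lt_0_INR; lia).
    assert (He : 0 < e <= /2).
    { unfold e. split. apply Rinv_0_lt_compat; lra. apply Rinv_le_contravar. lra. rewrite S_INR. pose proof (pos_INR M). lra. }
    set (q := 1 - e). assert (Hq : 0 < q < 1) by (unfold q; lra).
    set (th := t + ln q).
    assert (Hx : exp th = L * q) by (unfold th; rewrite exp_plus, exp_ln by lra; reflexivity).
    assert (Hu : U th).
    { unfold U. rewrite Etb. simpl. unfold th. assert (ln q < 0) by (rewrite <- ln_1; apply ln_increasing; lra). lra. }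
    apply (Hgoal th Hu).
    assert (HT : sum_f_R0 (P 0 th) N <= C).
    { unfold C. apply sum_Rle. intros z _. unfold P, bk. rewrite Hx. simpl pow at 1.
      pose proof (F_pos z). unfold Rdiv. rewrite Rmult_1_l, (Rmult_comm (L ^ z)).
      apply Rmult_le_compat_l. left; apply Rinv_0_lt_compat; auto.
      apply pow_incr. split. nra. nra. }
    assert (HS : INR (S M) / 2 <= Sk 0 th).
    { rewrite Sk_eq. eapply Rle_trans; [|apply sum_le_Series; [apply P_nonneg|apply P_ex; auto]].
      instantiate (1 := M).
      apply Rle_trans with (sum_f_R0 (fun _ => q ^ M) M).
      - rewrite sum_cte. pose proof (bern e M ltac:(lra)). fold q in H.
        assert (INR M * e <= /2).
        { unfold e. apply Rmult_le_reg_r with (2 * INR (S M)). lra.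
          rewrite Rmult_assoc, Rinv_l by lra. rewrite S_INR. lra. }
        replace (INR (S M) / 2) with (INR (S M) * / 2) by reflexivity.
        rewrite (Rmult_comm (q ^ M)). apply Rmult_le_compat_l. lra. lra.
      - apply sum_Rle. intros z Hz. unfold P, bk. rewrite Hx. simpl pow at 1.
        apply Rle_trans with (q ^ z).
        + apply pow_decr. lra. lia.
        + pose proof (F_pos z). rewrite Rpow_mult_distr.
          replace (1 / ffact f z * (L ^ z * q ^ z)) with ((L ^ z / ffact f z) * q ^ z) by (field; lra).
          assert (1 <= L ^ z / ffact f z).
          { apply Rmult_le_reg_r with (ffact f z); auto. unfold Rdiv. rewrite Rmult_assoc, Rinv_l by lra.
            specialize (HF z). lra. }
          assert (0 <= q ^ z) by (apply pow_le; lra). nra. }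
    rewrite S_INR in HS. lra.
  -
    set (C := sum_f_R0 (fun z => / ffact f z) N).
    assert (HC : 0 <= C) by (apply cond_pos_sum; intros; left; apply Rinv_0_lt_compat, F_pos).
    set (x := Rmax 1 (2 * C * ffact f (S N)) + 1).
    assert (Hx1 : 1 <= x) by (unfold x; pose proof (Rmax_l 1 (2 * C * ffact f (S N))); lra).
    assert (Hx2 : 2 * C * ffact f (S N) <= x) by (unfold x; pose proof (Rmax_r 1 (2 * C * ffact f (S N))); lra).
    set (th := ln x). assert (Hex : exp th = x) by (apply exp_ln; lra).
    assert (Hu : U th) by (unfold U; rewrite Etb; simpl; auto).
    apply (Hgoal th Hu).
    assert (HT : sum_f_R0 (P 0 th) N <= x ^ N * C).
    { unfold C. rewrite scal_sum. apply sum_Rle. intros z Hz. unfold P, bk. rewrite Hex. simpl pow at 1.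
      pose proof (F_pos z). assert (x ^ z <= x ^ N) by (apply Rle_pow; auto).
      assert (0 < / ffact f z) by (apply Rinv_0_lt_compat; auto). unfold Rdiv. rewrite Rmult_1_l. nra. }
    assert (HS : x ^ S N / ffact f (S N) <= Sk 0 th).
    { rewrite Sk_eq. replace (x ^ S N / ffact f (S N)) with (P 0 th (S N)).
      apply Series_ge_term. apply P_nonneg. apply P_ex; auto. unfold P, bk. rewrite Hex, pow_O. unfold Rdiv. ring. }
    pose proof (F_pos (S N)).
    assert (2 * (x ^ N * C) <= x ^ S N / ffact f (S N)).
    { change (x ^ S N) with (x * x ^ N). apply Rmult_le_reg_r with (ffact f (S N)); auto. unfold Rdiv.
      replace (x * x ^ N * / ffact f (S N) * ffact f (S N)) with (x * x ^ N) by (field; lra).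
      assert (0 <= x ^ N) by (apply pow_le; lra). nra. }
    lra.
  - exfalso. pose proof thetabar_lb. rewrite Etb in H. simpl in H. auto.
Qed.

Lemma rh_onto r : 0 < r -> exists th, U th /\ rh th = r.
Proof.
  intros Hr. destruct (rh_small r Hr) as [ta [Ha Hra]]. destruct (rh_large r) as [tb [Hb Hrb]].
  assert (Hab : ta < tb).
  { destruct (Rlt_le_dec ta tb) as [?|Hle]; auto. destruct Hle as [Hlt|Heq].
    pose proof (rh_incr tb ta Ha Hlt). lra. subst; lra. }
  destruct (IVT_interv (fun t => rh t - r) ta tb) as [c [Hc Ec]]; auto.
  - intros a Ha'. apply continuity_pt_minus. apply rh_cont. apply (U_down a tb); auto; lra.
    apply continuity_pt_const. intros u v; reflexivity.
  - lra.
  - lra.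
  - exists c. split. apply (U_down c tb); auto; lra. lra.
Qed.

Lemma rh_pos th : U th -> 0 < rh th.
Proof. intros Hu. unfold rh. apply Rdiv_lt_0_compat. apply S1_pos; auto. apply S0_pos; auto. Qed.

Lemma theta_spec r : 0 < r -> U (theta_of f r) /\ rh (theta_of f r) = r.
Proof.
  intros Hr. unfold theta_of.
  destruct (epsilon_spec (inhabits 0) (fun th => Rbar_lt th (thetabar f) /\ rho_of f th = r)) as [H1 H2].
  - destruct (rh_onto r Hr) as [th [Hu E]]. exists th. split; auto. rewrite rho_eq; auto.
  - split; auto. rewrite <- rho_eq; auto.
Qed.

Lemma theta_mono r1 r2 : 0 < r1 -> r1 < r2 -> theta_of f r1 < theta_of f r2.
Proof.
  intros H1 H12. destruct (theta_spec r1 H1) as [U1 E1]. destruct (theta_spec r2 ltac:(lra)) as [U2 E2].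
  destruct (Rlt_le_dec (theta_of f r1) (theta_of f r2)) as [?|Hle]; auto.
  destruct Hle as [Hlt|Heq]. pose proof (rh_incr _ _ U1 Hlt). lra.
  rewrite Heq in E2. lra.
Qed.

Lemma theta_of_rh th : U th -> theta_of f (rh th) = th.
Proof.
  intros Hu. pose proof (rh_pos th Hu). destruct (theta_spec (rh th) H) as [U1 E1].
  destruct (Rtotal_order (theta_of f (rh th)) th) as [Hlt|[Heq|Hgt]]; auto.
  pose proof (rh_incr _ _ Hu Hlt). lra. pose proof (rh_incr _ _ U1 Hgt). lra.
Qed.

Lemma theta_cont r : 0 < r -> continuity_pt (theta_of f) r.
Proof.
  intros Hr.
  destruct (theta_spec (r/2) ltac:(lra)) as [Ua Ea]. destruct (theta_spec (2*r) ltac:(lra)) as [Ub Eb].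
  apply (continuity_pt_recip_interv rh (theta_of f) (theta_of f (r/2)) (theta_of f (2*r))).
  - apply theta_mono; lra.
  - intros x y Hx Hxy Hy. apply rh_incr; auto. apply (U_down _ (theta_of f (2*r))); auto.
  - intros x Hx Hy. rewrite Ea in Hx. unfold comp, id. apply theta_spec. lra.
  - intros x Hx Hy. rewrite Ea in Hx. rewrite Eb in Hy. split.
    destruct (Req_dec x (r/2)). subst; lra. left; apply theta_mono; lra.
    destruct (Req_dec x (2*r)). subst; lra. left; apply theta_mono; lra.
  - intros a Ha. apply rh_cont. apply (U_down _ (theta_of f (2*r))); auto; lra.
  - rewrite Ea, Eb. lra.
Qed.

Lemma theta_deriv r : 0 < r -> is_derive (theta_of f) r (1 / Vh (theta_of f r)).
Proof.
  intros Hr.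
  destruct (theta_spec (r/2) ltac:(lra)) as [Ua Ea]. destruct (theta_spec (2*r) ltac:(lra)) as [Ub Eb].
  assert (Prf : forall a, theta_of f (r/2) <= a <= theta_of f (2*r) -> derivable_pt rh a).
  { intros a Ha. apply rh_dpt. apply (U_down _ (theta_of f (2*r))); auto; lra. }
  assert (Hinc : theta_of f (r/2) <= theta_of f r <= theta_of f (2*r)).
  { split; left; apply theta_mono; lra. }
  apply is_derive_Reals.
  pose proof (derivable_pt_lim_recip_interv rh (theta_of f) (r/2) (2*r) r Prf (theta_cont r Hr)
    ltac:(lra) ltac:(lra) Hinc) as HH.
  assert (Ed : derive_pt rh (theta_of f r) (Prf (theta_of f r) Hinc) = Vh (theta_of f r)).
  { apply derive_pt_eq_0. apply is_derive_Reals. apply rh_deriv. apply theta_spec; auto. }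
  assert (Hc : forall x, r/2 <= x <= 2*r -> comp rh (theta_of f) x = id x).
  { intros x Hx. unfold comp, id. apply theta_spec. lra. }
  specialize (HH Hc). 
  assert (Hn : derive_pt rh (theta_of f r) (Prf (theta_of f r) Hinc) <> 0).
  { rewrite Ed. apply Rgt_not_eq. apply Vh_pos. apply theta_spec; auto. }
  specialize (HH Hn). rewrite Ed in HH. exact HH.
Qed.

Lemma loc_pos r : 0 < r -> locally r (fun t => 0 < t).
Proof.
  intros Hr. exists (mkposreal r Hr). intros y Hy.
  unfold ball in Hy; simpl in Hy. unfold AbsRing_ball, abs, minus, plus, opp in Hy; simpl in Hy.
  apply Rabs_lt_between in Hy. lra.
Qed.

Lemma H_eq r : 0 < r -> Hflux f r = exp (theta_of f r).
Proof. intros Hr. unfold Hflux. apply Hser_eq. apply theta_spec; auto. Qed.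

Definition H1 (r : R) := exp (theta_of f r) / Vh (theta_of f r).
Definition H2 (r : R) := Q (theta_of f r) / (Vh (theta_of f r) ^ 3).

Lemma H_d1 r : 0 < r -> is_derive (Hflux f) r (H1 r).
Proof.
  intros Hr. apply (is_derive_ext_loc (fun t => exp (theta_of f t))).
  - apply (filter_imp (fun t => 0 < t)). intros t Ht. symmetry. apply H_eq; auto. apply loc_pos; auto.
  - eapply is_derive_eq. apply (is_derive_comp exp (theta_of f) r). apply is_derive_exp. apply theta_deriv; auto.
    unfold H1. change (scal (1 / Vh (theta_of f r)) (exp (theta_of f r))) with ((1 / Vh (theta_of f r)) * (exp (theta_of f r))).
    field. apply Rgt_not_eq, Vh_pos, theta_spec; auto.
Qed.

Lemma H_d2 r : 0 < r -> is_derive H1 r (H2 r).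
Proof.
  intros Hr. destruct (theta_spec r Hr) as [Hu _]. pose proof (Vh_pos _ Hu).
  unfold H1. eapply is_derive_eq.
  apply (is_derive_comp (fun t => exp t / Vh t) (theta_of f) r).
  apply deriv_div. apply is_derive_exp. apply Vh_deriv; auto. lra.
  apply theta_deriv; auto.
  change (scal (1 / Vh (theta_of f r)) ((exp (theta_of f r) * Vh (theta_of f r) - exp (theta_of f r) * Kh (theta_of f r)) / Vh (theta_of f r) ^ 2))
    with ((1 / Vh (theta_of f r)) * ((exp (theta_of f r) * Vh (theta_of f r) - exp (theta_of f r) * Kh (theta_of f r)) / Vh (theta_of f r) ^ 2)).
  unfold H2, Q. field. lra.
Qed.

Lemma H_second r : 0 < r -> ex_derive_n (Hflux f) 2 r /\ Derive_n (Hflux f) 2 r = H2 r.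
Proof.
  intros Hr.
  assert (Hd : is_derive (Derive_n (Hflux f) 1) r (H2 r)).
  { apply (is_derive_ext_loc H1). apply (filter_imp (fun t => 0 < t)).
    intros t Ht. simpl. symmetry. apply is_derive_unique. apply H_d1; auto. apply loc_pos; auto.
    apply H_d2; auto. }
  split. simpl. exists (H2 r). exact Hd.
  simpl. apply is_derive_unique. exact Hd.
Qed.

Lemma Q_sign_conv th : U th -> fconvex f -> 0 <= Q th /\ (~ flinear f -> 0 < Q th) /\ (flinear f -> Q th = 0).
Proof.
  intros Hu Hc.
  assert (Hcs : convseq (fun z => 1 * rfun th z)).
  { intros z. unfold rfun. rewrite !S_INR. specialize (Hc z). lra. }
  assert (Hnl : ~ flinear f -> 0 < Q th).
  { intros Hn. pose proof (core_scaled th 1 Hu ltac:(lra) Hcs (nonlin_rfun th Hn)). lra. }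
  assert (Hl : flinear f -> Q th = 0).
  { intros Hl. apply rfun_zero; auto. apply lin_rfun; auto. }
  split; [|split]; auto.
  destruct (classic (flinear f)) as [L|NL]. rewrite Hl; auto; lra. left; auto.
Qed.

Lemma Q_sign_conc th : U th -> fconcave f -> Q th <= 0 /\ (~ flinear f -> Q th < 0) /\ (flinear f -> Q th = 0).
Proof.
  intros Hu Hc.
  assert (Hcs : convseq (fun z => -1 * rfun th z)).
  { intros z. unfold rfun. rewrite !S_INR. specialize (Hc z). lra. }
  assert (Hnl : ~ flinear f -> Q th < 0).
  { intros Hn. pose proof (core_scaled th (-1) Hu ltac:(lra) Hcs (nonlin_rfun th Hn)). lra. }
  assert (Hl : flinear f -> Q th = 0).
  { intros Hl. apply rfun_zero; auto. apply lin_rfun; auto. }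
  split; [|split]; auto.
  destruct (classic (flinear f)) as [L|NL]. rewrite Hl; auto; lra. left; auto.
Qed.

Lemma H2_pos_iff r : 0 < r -> (0 < H2 r <-> 0 < Q (theta_of f r)).
Proof.
  intros Hr. destruct (theta_spec r Hr) as [Hu _]. pose proof (Vh_pos _ Hu).
  unfold H2. assert (0 < Vh (theta_of f r) ^ 3) by (apply pow_lt; auto).
  split; intros H'.
  - apply Rmult_lt_reg_r with (/ Vh (theta_of f r) ^ 3). apply Rinv_0_lt_compat; auto.
    rewrite Rmult_0_l. exact H'.
  - apply Rdiv_lt_0_compat; auto.
Qed.

Lemma H2_neg_iff r : 0 < r -> (H2 r < 0 <-> Q (theta_of f r) < 0).
Proof.
  intros Hr. destruct (theta_spec r Hr) as [Hu _]. pose proof (Vh_pos _ Hu).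
  unfold H2. assert (0 < Vh (theta_of f r) ^ 3) by (apply pow_lt; auto).
  assert (0 < / Vh (theta_of f r) ^ 3) by (apply Rinv_0_lt_compat; auto).
  unfold Rdiv. split; intros H'; nra.
Qed.

End Main.


Lemma cont_of_der (h : R -> R) (d x : R) : is_derive h x d -> continuity_pt h x.
Proof. intros H. apply derivable_continuous_pt. exists d. apply is_derive_Reals. exact H. Qed.

Lemma convex_aux (h h1 h2 : R -> R) :
  (forall r, 0 < r -> is_derive h r (h1 r)) -> (forall r, 0 < r -> is_derive h1 r (h2 r)) ->
  (forall r, 0 < r -> 0 <= h2 r) ->
  forall x y t, 0 < x -> x <= y -> 0 <= t <= 1 -> h (t * x + (1 - t) * y) <= t * h x + (1 - t) * h y.
Proof.
  intros D1 D2 P x y t Hx Hxy Ht.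
  assert (Mono : forall a b, 0 < a -> a <= b -> h1 a <= h1 b).
  { intros a b Ha Hab. destruct (MVT_gen h1 a b h2) as [c [Hc Ec]].
    - intros u Hu. rewrite Rmin_left, Rmax_right in Hu by lra. apply D2; lra.
    - intros u Hu. rewrite Rmin_left, Rmax_right in Hu by lra. apply (cont_of_der _ (h2 u)). apply D2; lra.
    - rewrite Rmin_left, Rmax_right in Hc by lra. assert (0 <= h2 c) by (apply P; lra).
      assert (0 <= h2 c * (b - a)) by (apply Rmult_le_pos; lra). lra. }
  set (z := t * x + (1 - t) * y).
  assert (Hz : x <= z <= y) by (unfold z; split; nra).
  destruct (MVT_gen h x z h1) as [c1 [Hc1 E1]].
  { intros u Hu. rewrite Rmin_left, Rmax_right in Hu by lra. apply D1; lra. }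
  { intros u Hu. rewrite Rmin_left, Rmax_right in Hu by lra. apply (cont_of_der _ (h1 u)). apply D1; lra. }
  destruct (MVT_gen h z y h1) as [c2 [Hc2 E2]].
  { intros u Hu. rewrite Rmin_left, Rmax_right in Hu by lra. apply D1; lra. }
  { intros u Hu. rewrite Rmin_left, Rmax_right in Hu by lra. apply (cont_of_der _ (h1 u)). apply D1; lra. }
  rewrite Rmin_left, Rmax_right in Hc1, Hc2 by lra.
  assert (M : h1 c1 <= h1 c2) by (apply Mono; lra).
  assert (Ezx : z - x = (1 - t) * (y - x)) by (unfold z; ring).
  assert (Eyz : y - z = t * (y - x)) by (unfold z; ring).
  rewrite Ezx in E1. rewrite Eyz in E2.
  assert (t * (1 - t) * (y - x) * (h1 c2 - h1 c1) >= 0).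
  { apply Rle_ge. apply Rmult_le_pos; [|lra]. apply Rmult_le_pos; [|lra]. nra. }
  replace (t * h x + (1 - t) * h y) with (h z + (t * (1 - t) * (y - x) * (h1 c2 - h1 c1))).
  lra. replace (h x) with (h z - h1 c1 * ((1 - t) * (y - x))) by lra.
  replace (h y) with (h z + h1 c2 * (t * (y - x))) by lra. ring.
Qed.

Lemma convex_of_d2 (h h1 h2 : R -> R) :
  (forall r, 0 < r -> is_derive h r (h1 r)) -> (forall r, 0 < r -> is_derive h1 r (h2 r)) ->
  (forall r, 0 < r -> 0 <= h2 r) -> convex_pos h.
Proof.
  intros D1 D2 P x y t Hx Hy Ht.
  destruct (Rle_dec x y) as [Hxy|Hyx].
  - apply (convex_aux h h1 h2); auto.
  - pose proof (convex_aux h h1 h2 D1 D2 P y x (1 - t) Hy ltac:(lra) ltac:(lra)).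
    replace (t * x + (1 - t) * y) with ((1 - t) * y + (1 - (1 - t)) * x) by ring. lra.
Qed.

Lemma concave_of_d2 (h h1 h2 : R -> R) :
  (forall r, 0 < r -> is_derive h r (h1 r)) -> (forall r, 0 < r -> is_derive h1 r (h2 r)) ->
  (forall r, 0 < r -> h2 r <= 0) -> concave_pos h.
Proof.
  intros D1 D2 P x y t Hx Hy Ht.
  pose proof (convex_of_d2 (fun r => - h r) (fun r => - h1 r) (fun r => - h2 r)) as C.
  assert (convex_pos (fun r => - h r)).
  { apply C.
    - intros r Hr. apply (is_derive_opp h r (h1 r)). auto.
    - intros r Hr. apply (is_derive_opp h1 r (h2 r)). auto.
    - intros r Hr. specialize (P r Hr). lra. }
  specialize (H x y t Hx Hy Ht). simpl in H. lra.
Qed.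


Theorem propositionC1 (f : nat -> R)
  (f_mono : forall z : nat, f z <= f (S z))
  (f_0 : f 0%nat = 0)
  (f_pos : forall z : nat, (0 < z)%nat -> 0 < f z) :
  (forall r : R, 0 < r -> ex_derive_n (Hflux f) 2 r) /\
  (fconvex f ->
     convex_pos (Hflux f) /\
     ((forall r : R, 0 < r -> 0 < Derive_n (Hflux f) 2 r) <-> ~ flinear f)) /\
  (fconcave f ->
     concave_pos (Hflux f) /\
     ((forall r : R, 0 < r -> Derive_n (Hflux f) 2 r < 0) <-> ~ flinear f)).
Proof.
  assert (S2 : forall r, 0 < r -> ex_derive_n (Hflux f) 2 r /\ Derive_n (Hflux f) 2 r = H2 f r)
    by (intros; eapply H_second; eauto).
  assert (D1 : forall r, 0 < r -> is_derive (Hflux f) r (H1 f r)) by (intros; eapply H_d1; eauto).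
  assert (D2 : forall r, 0 < r -> is_derive (H1 f) r (H2 f r)) by (intros; eapply H_d2; eauto).
  assert (PI : forall r, 0 < r -> (0 < H2 f r <-> 0 < Q f (theta_of f r))) by (intros; eapply H2_pos_iff; eauto).
  assert (NI : forall r, 0 < r -> (H2 f r < 0 <-> Q f (theta_of f r) < 0)) by (intros; eapply H2_neg_iff; eauto).
  assert (TS : forall r, 0 < r -> U f (theta_of f r)).
  { intros r Hr. edestruct theta_spec as [Hu _]; eauto. }
  split; [|split].
  - intros r Hr. destruct (S2 r Hr); auto.
  - intros Hc.
    assert (QS : forall r, 0 < r -> 0 <= Q f (theta_of f r) /\ (~ flinear f -> 0 < Q f (theta_of f r)) /\ (flinear f -> Q f (theta_of f r) = 0))
      by (intros r Hr; eapply Q_sign_conv; eauto).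
    split.
    + apply (convex_of_d2 _ (H1 f) (H2 f)); auto.
      intros r Hr. destruct (QS r Hr) as [[Hq|Hq] _].
      { left. apply PI; auto. }
      { unfold H2. rewrite <- Hq. unfold Rdiv. rewrite Rmult_0_l. lra. }
    + split.
      * intros Hall Hl. specialize (Hall 1 Rlt_0_1). destruct (S2 1 Rlt_0_1) as [_ E]. rewrite E in Hall.
        apply (PI 1 Rlt_0_1) in Hall. destruct (QS 1 Rlt_0_1) as [_ [_ Z]]. rewrite Z in Hall; auto. lra.
      * intros Hnl r Hr. destruct (S2 r Hr) as [_ E]. rewrite E. apply PI; auto. apply QS; auto.
  - intros Hc.
    assert (QS : forall r, 0 < r -> Q f (theta_of f r) <= 0 /\ (~ flinear f -> Q f (theta_of f r) < 0) /\ (flinear f -> Q f (theta_of f r) = 0))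
      by (intros r Hr; eapply Q_sign_conc; eauto).
    split.
    + apply (concave_of_d2 _ (H1 f) (H2 f)); auto.
      intros r Hr. destruct (QS r Hr) as [[Hq|Hq] _].
      { left. apply NI; auto. }
      { unfold H2. rewrite Hq. unfold Rdiv. rewrite Rmult_0_l. lra. }
    + split.
      * intros Hall Hl. specialize (Hall 1 Rlt_0_1). destruct (S2 1 Rlt_0_1) as [_ E]. rewrite E in Hall.
        apply (NI 1 Rlt_0_1) in Hall. destruct (QS 1 Rlt_0_1) as [_ [_ Z]]. rewrite Z in Hall; auto. lra.
      * intros Hnl r Hr. destruct (S2 r Hr) as [_ E]. rewrite E. apply NI; auto. apply QS; auto.
Qed.
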